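(* Let $P$ be a poset on $[n]$ with natural labeling and let all edge weights $x_1,\dots,x_n$ be strictly positive. Then each of the four continuous time Markov chains on $\mathcal{L}(P)$ given by the uniform transposition graph, the transposition graph, the uniform promotion graph, and the promotion graph is irreducible, and hence has a unique stationary distribution.
   Context: $\mathcal{L}(P)=\{\pi\in S_n : i\prec j \Rightarrow \pi^{-1}_i<\pi^{-1}_j\}$ in one-line notation $\pi=\pi_1\cdots\pi_n$. $\pi\tau_i$ ($1\le i<n$) swaps $\pi_i,\pi_{i+1}$ if they are incomparable and is $\pi$ otherwise; operators act on the right; $\partial_j=\tau_j\cdots\tau_{n-1}$ ($1\le j\le n$). All four graphs have vertex set $\mathcal{L}(P)$: uniform transposition graph has edges $\pi\to\pi\tau_j$ of weight $x_j$ ($j\in[n-1]$); transposition graph has edges $\pi\to\pi\tau_j$ of weight $x_{\pi_j}$; uniform promotion graph has edges $\pi\to\pi\partial_j$ of weight $x_j$ ($j\in[n]$); promotion graph has edges $\pi\to\pi\partial_j$ of weight $x_{\pi_j}$. The associated continuous time chain traverses each edge at rate equal to its weight; it is irreducible if its digraph is strongly connected. *)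

(* Defs.v *)
From HB Require Import structures.
From mathcomp Require Import all_boot all_order all_algebra all_fingroup.
Set Implicit Arguments. Unset Strict Implicit. Unset Printing Implicit Defensive.
Import Order.TTheory GRing.Theory Num.Theory.

(* Conventions: the ground set [n] = {1,...,n} is 'I_n = {0,...,n-1};
   positions 1..n are likewise 0..n-1.  A poset P is given by its strict
   order relation [prec : rel 'I_n].  A permutation s : {perm 'I_n} is read
   in one-line notation: s i is the entry pi_{i+1} at position i. *)

Local Open Scope ring_scope.
Section Defs.
Variables (n : nat) (prec : rel 'I_n).

Definition incomp (a b : 'I_n) : bool := ~~ prec a b && ~~ prec b a.

Definition linext (s : {perm 'I_n}) : bool :=
  [forall i, forall j, prec i j ==> ((s^-1)%g i < (s^-1)%g j)%N].

(* pi tau_{i+1} : swap the entries at positions i and i+1 (0-indexed) if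
   they are incomparable, identity otherwise (and identity if i+1 >= n). *)
Definition tau (s : {perm 'I_n}) (i : nat) : {perm 'I_n} :=
  match (insub i : option 'I_n), (insub i.+1 : option 'I_n) with
  | Some a, Some b => if incomp (s a) (s b) then (tperm a b * s)%g else s
  | _, _ => s
  end.

(* pi partial_{j+1} = pi tau_{j+1} tau_{j+2} ... tau_{n-1} (operators act on
   the right, so tau_{j+1} is applied first). *)
Definition partial (s : {perm 'I_n}) (j : nat) : {perm 'I_n} :=
  foldl tau s (iota j (n.-1 - j)).

Inductive graph_kind := UnifTransp | Transp | UnifProm | Prom.

Variables (R : realFieldType) (x : 'I_n -> R).

(* Outgoing weighted edges (target, weight) from s; multi-edges allowed. *)
Definition edges (k : graph_kind) (s : {perm 'I_n}) : seq ({perm 'I_n} * R) :=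
  match k with
  | UnifTransp => [seq (tau s j, x j) | j : 'I_n <- enum 'I_n & (j.+1 < n)%N]
  | Transp => [seq (tau s j, x (s j)) | j : 'I_n <- enum 'I_n & (j.+1 < n)%N]
  | UnifProm => [seq (partial s j, x j) | j : 'I_n <- enum 'I_n]
  | Prom => [seq (partial s j, x (s j)) | j : 'I_n <- enum 'I_n]
  end.

Definition rate (k : graph_kind) (s t : {perm 'I_n}) : R :=
  \sum_(e <- edges k s | e.1 == t) e.2.

Definition edge (k : graph_kind) (s t : {perm 'I_n}) : bool :=
  has (fun e => (e.1 == t) && (0 < e.2)) (edges k s).

Definition irreducible (k : graph_kind) : Prop :=
  forall s t, linext s -> linext t ->
    connect [rel a b | [&& linext a, linext b & edge k a b]] s t.

(* stationary distribution of the continuous-time chain with generator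
   Q(s,t) = rate s t (s <> t), Q(s,s) = - sum_{t <> s} rate s t, on L(P);
   represented as a function on all permutations vanishing off L(P). *)
Definition stationary (k : graph_kind) (p : {ffun {perm 'I_n} -> R}) : Prop :=
  [/\ forall s, ~~ linext s -> p s = 0,
      forall s, 0 <= p s,
      \sum_(s | linext s) p s = 1
    & forall t, linext t ->
        \sum_(s | linext s && (s != t)) p s * rate k s t
        = p t * \sum_(u | linext u && (u != t)) rate k t u].

End Defs.

(* Main.v *)
Require Import Defs.
From HB Require Import structures.
From mathcomp Require Import all_boot all_order all_algebra all_fingroup.
From mathcomp Require Import zify.
Set Implicit Arguments. Unset Strict Implicit. Unset Printing Implicit Defensive.
Import Order.TTheory GRing.Theory Num.Theory.

Section Comb.
Variables (n : nat) (prec : rel 'I_n).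
Hypothesis natural : forall i j, prec i j -> (i < j)%N.

Local Notation tau := (tau prec).
Local Notation linext := (linext prec).
Local Notation partial := (partial prec).

Lemma ne_val (u a : 'I_n) : u <> a -> val u <> val a.
Proof. by move=> h e; apply: h; apply: val_inj. Qed.

Lemma tau_out s i : (n <= i.+1)%N -> tau s i = s.
Proof.
move=> H; rewrite /Defs.tau (@insubN _ _ _ i.+1); last by rewrite -leqNgt.
by case: (insub i).
Qed.

Lemma tau_at s (a b : 'I_n) : val b = (val a).+1 ->
  tau s a = if incomp prec (s a) (s b) then (tperm a b * s)%g else s.
Proof.
move=> H; rewrite /Defs.tau valK.
have -> : insub (val a).+1 = Some b by rewrite -H valK.
by [].
Qed.

Lemma incompC u v : incomp prec u v = incomp prec v u.
Proof. by rewrite /incomp andbC. Qed.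

Lemma tauK s i : tau (tau s i) i = s.
Proof.
case: (ltnP i.+1 n) => H; last by rewrite !tau_out.
pose a : 'I_n := Ordinal (ltnW H); pose b : 'I_n := Ordinal H.
have Hab : val b = (val a).+1 by [].
have -> : i = val a by [].
rewrite (tau_at s Hab); case: ifP => Hc; last by rewrite (tau_at s Hab) Hc.
rewrite (tau_at _ Hab) !permM tpermL tpermR incompC Hc.
by rewrite mulgA tperm2 mul1g.
Qed.

Lemma tperm_lt (a b u v : 'I_n) : val b = (val a).+1 -> (u < v)%N ->
  ~ (u = a /\ v = b) -> (tperm a b u < tperm a b v)%N.
Proof.
move=> Hb Huv Hn.
case: tpermP => [eu|eu|/ne_val hu1 /ne_val hu2];
case: tpermP => [ev|ev|/ne_val hv1 /ne_val hv2]; subst => //; simpl in *; try lia.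
all: by exfalso; apply: Hn.
Qed.

Lemma linext_tau s i : linext s -> linext (tau s i).
Proof.
move=> Ls.
case: (ltnP i.+1 n) => H; last by rewrite !tau_out.
pose a : 'I_n := Ordinal (ltnW H); pose b : 'I_n := Ordinal H.
have Hab : val b = (val a).+1 by [].
have -> : i = val a by [].
rewrite (tau_at s Hab); case: ifP => Hc //.
apply/forallP => y; apply/forallP => z; apply/implyP => pyz.
have := forallP (forallP Ls y) z; rewrite pyz /= => Huv.
rewrite invMg tpermV !permM; apply: tperm_lt => // [[hu hv]].
move: Hc; rewrite /incomp.
have ya : y = s a by rewrite -hu permKV.
have zb : z = s b by rewrite -hv permKV.
by rewrite -ya -zb pyz.
Qed.

Lemma foldl_tau_inj l : injective (fun s => foldl tau s l).
Proof.
elim: l => [|i l IH] s1 s2 //= /IH H.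
exact: (@can_inj _ _ (tau^~ i) (tau^~ i) (fun s => tauK s i) _ _ H).
Qed.

Lemma linext_foldl l s : linext s -> linext (foldl tau s l).
Proof. elim: l s => [|i l IH] s //= Ls; apply: IH; exact: linext_tau. Qed.

Lemma partial_step s (a b : 'I_n) : val b = (val a).+1 ->
  partial s a = partial (tau s a) b.
Proof.
move=> Hb; rewrite /Defs.partial.
have -> : (n.-1 - a = (n.-1 - b).+1)%N by have := ltn_ord b; simpl in *; lia.
by rewrite /= -Hb.
Qed.

Lemma linext1 : linext 1%g.
Proof.
apply/forallP => y; apply/forallP => z; apply/implyP => pyz.
by rewrite invg1 !perm1; apply: natural.
Qed.

Definition mu (s : {perm 'I_n}) := (\sum_(i < n) i * s i)%N.

Lemma mu_bound s : (mu s <= n * (n * n))%N.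
Proof.
rewrite /mu; apply: leq_trans (_ : \sum_(i < n) n * n <= _)%N.
  apply: leq_sum => i _; apply: leq_mul; exact: ltnW.
by rewrite sum_nat_const card_ord.
Qed.

Lemma mu_swap (s : {perm 'I_n}) (a b : 'I_n) : val b = (val a).+1 -> (s b < s a)%N ->
  (mu s < mu (tperm a b * s)%g)%N.
Proof.
move=> Hb Hs.
have ba : b != a by apply/eqP => /(congr1 val); rewrite Hb /=; lia.
have split3 (F : 'I_n -> nat) : (\sum_(i < n) F i = F a + (F b + \sum_(i | (i != a) && (i != b)) F i))%N.
  by rewrite (bigD1 a) //= (bigD1 b) //=.
rewrite /mu !split3 !permM tpermL tpermR.
set S1 := (\sum_(i | _) _)%N; set S2 := (\sum_(i | _) _)%N.
have -> : S2 = S1.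
  apply: eq_bigr => i /andP [ia ib]; rewrite permM tpermD // eq_sym //.
rewrite Hb /=; simpl in *; nia.
Qed.

Lemma incr_id (s : {perm 'I_n}) :
  (forall i j : 'I_n, val j = (val i).+1 -> (s i < s j)%N) -> s = 1%g.
Proof.
move=> Hs.
have ge k : forall i : 'I_n, val i = k -> (k <= s i)%N.
  elim: k => [//|k IH] i Hi.
  have hk : (k < n)%N by have := ltn_ord i; simpl in *; lia.
  have := IH (Ordinal hk) erefl; have := Hs (Ordinal hk) i Hi => /=; simpl in *; lia.
have le d : forall i : 'I_n, (val i + d = n.-1)%N -> (s i <= i)%N.
  elim: d => [|d IH] i Hi.
    by have := ltn_ord (s i); simpl in *; lia.
  have hk : (i.+1 < n)%N by have := ltn_ord i; simpl in *; lia.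
  have := IH (Ordinal hk) ltac:(simpl in *; lia); have := Hs i (Ordinal hk) erefl => /=; simpl in *; lia.
apply/permP => i; rewrite perm1; apply/val_inj; apply/eqP.
rewrite eqn_leq (le (n.-1 - i)%N) ?ge //; have := ltn_ord i; simpl in *; lia.
Qed.

Lemma descent s : linext s -> s != 1%g ->
  exists i, [/\ (i.+1 < n)%N, linext (tau s i) & (mu s < mu (tau s i))%N].
Proof.
move=> Ls ns1.
have [/forallP H|] := boolP [forall i : 'I_n, forall j : 'I_n,
    (val j == (val i).+1) ==> (s i < s j)%N].
  case/eqP: ns1; apply: incr_id => i j Hj.
  by have := forallP (H i) j; rewrite Hj eqxx.
case/forallPn => i /forallPn [j]; rewrite negb_imply => /andP [/eqP Hj Hlt].
have ji : j != i by apply/eqP => /(congr1 val); rewrite Hj /=; simpl in *; lia.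
have Hlt' : (s j < s i)%N.
  rewrite ltn_neqAle leqNgt Hlt andbT.
  by apply: contra ji => /eqP /val_inj /perm_inj ->.
have Hc : incomp prec (s i) (s j).
  rewrite /incomp; apply/andP; split; apply/negP => P.
    by have := natural P; simpl in *; lia.
  have := forallP (forallP Ls (s j)) (s i); rewrite P /= !permK; simpl in *; lia.
exists i; split.
- by have := ltn_ord j; rewrite Hj.
- exact: linext_tau.
- by rewrite (tau_at s Hj) Hc; apply: mu_swap.
Qed.

Variable E : rel {perm 'I_n}.
Hypothesis step : forall a i, linext a -> (i.+1 < n)%N -> connect E a (tau a i).

Lemma step2 a i : linext a -> (i.+1 < n)%N -> connect E (tau a i) a.
Proof.
move=> La Hi; have := step (linext_tau i La) Hi; by rewrite tauK.
Qed.

Lemma bubble s : linext s -> connect E s 1%g /\ connect E 1%g s.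
Proof.
suff : forall m s, linext s -> (n * (n * n) - mu s <= m)%N ->
  connect E s 1%g /\ connect E 1%g s.
  by move=> /(_ _ s) H Ls; apply: H Ls (leqnn _).
elim=> [|m IH] {}s Ls Hm; (have [->|ns1] := eqVneq s 1%g; first by split; apply: connect0);
  have [i [Hi Ls' Hmu]] := descent Ls ns1.
  by have := mu_bound (tau s i); lia.
have [H1 H2] := IH _ Ls' ltac:(have := mu_bound (tau s i); lia).
split; first exact: connect_trans (step Ls Hi) H1.
exact: connect_trans H2 (step2 Ls Hi).
Qed.

End Comb.

Local Open Scope ring_scope.

Section Ord.
Variable R : realFieldType.

Lemma exist_ord N (r : 'I_N -> 'I_N -> R) : (forall i j, 0 <= r i j) -> (0 < N)%N ->
  exists q : 'I_N -> R, [/\ forall i, 0 <= q i, \sum_i q i = 1 &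
    forall t, \sum_(s | s != t) q s * r s t = q t * \sum_(u | u != t) r t u].
Proof.
move=> r0 N0.
pose A := \matrix_(i, j) (if i == j then - \sum_(u | u != i) r i u else r i j).
have Ac : A *m const_mx 1 = 0 :> 'cV_N.
  apply/matrixP => i j; rewrite !mxE (bigD1 i) //= !mxE eqxx mulr1.
  under eq_bigr => u Hu do rewrite !mxE eq_sym (negbTE Hu) mulr1.
  by rewrite addNr.
have : \det A == 0.
  rewrite -det_tr; apply/det0P; exists (const_mx 1)^T.
    apply/eqP => /matrixP /(_ 0 (Ordinal N0)); rewrite !mxE => /eqP.
    by rewrite oner_eq0.
  by rewrite -[A^T]trmxK -trmx_mul trmxK Ac trmx0.
case/det0P => w w0 wA.
pose a t := \sum_(u | u != t) r t u.
have a0 t : 0 <= a t by apply: sumr_ge0.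
have balw t : \sum_(s | s != t) w 0 s * r s t = w 0 t * a t.
  have := congr1 (fun M : 'rV[R]_N => M 0 t) wA; rewrite !mxE (bigD1 t) //= !mxE eqxx.
  under eq_bigr => s Hs do rewrite !mxE (negbTE Hs).
  move/eqP; rewrite addrC addr_eq0 => /eqP ->.
  by rewrite mulrN opprK.
pose W s := `|w 0 s|.
have W0 s : 0 <= W s by rewrite /W normr_ge0.
have ineq t : W t * a t <= \sum_(s | s != t) W s * r s t.
  rewrite /W -(ger0_norm (a0 t)) -normrM -balw.
  apply: le_trans (ler_norm_sum _ _ _) _.
  by apply: ler_sum => s _; rewrite normrM (ger0_norm (r0 _ _)).
have sumeq : \sum_t (\sum_(s | s != t) W s * r s t - W t * a t) = 0.
  rewrite sumrB (exchange_big_dep predT) //=.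
  apply/eqP; rewrite subr_eq0; apply/eqP; apply: eq_bigr => s _.
  rewrite /a mulr_sumr; apply: eq_bigl => u; by rewrite eq_sym.
have eqW t : \sum_(s | s != t) W s * r s t = W t * a t.
  apply/eqP; rewrite -subr_eq0; apply/eqP.
  by apply: (psumr_eq0P _ sumeq) => // i _; rewrite subr_ge0.
pose S := \sum_i W i.
have S0 : S != 0.
  apply: contra w0 => /eqP HS; apply/eqP/matrixP => i j.
  rewrite (ord1 i) !mxE; apply/eqP; rewrite -normr_eq0; apply/eqP.
  by apply: (psumr_eq0P _ HS).
exists (fun i => W i / S); split.
- by move=> i; rewrite divr_ge0 // sumr_ge0.
- by rewrite -mulr_suml divff.
- move=> t; rewrite -mulrA (mulrC S^-1) mulrA -eqW mulr_suml.
  by apply: eq_bigr => s _; rewrite mulrAC.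
Qed.
End Ord.

Section Gen.
Variables (R : realFieldType) (T : finType) (V : pred T) (r : T -> T -> R).
Hypothesis r0 : forall s t, 0 <= r s t.

Definition stat (p : T -> R) : Prop :=
  [/\ forall s, ~~ V s -> p s = 0,
      forall s, 0 <= p s,
      \sum_(s | V s) p s = 1
    & forall t, V t ->
        \sum_(s | V s && (s != t)) p s * r s t
        = p t * \sum_(u | V u && (u != t)) r t u].

Lemma exist_gen v0 : V v0 -> exists p : {ffun T -> R}, stat p.
Proof.
move=> Vv0; have Hv0 : v0 \in V by [].
have N0 : (0 < #|V|)%N by apply/card_gt0P; exists v0.
have [q [q0 q1 qb]] := @exist_ord R _ (fun i j => r (enum_val i) (enum_val j)) (fun _ _ => r0 _ _) N0.
pose p := [ffun s => if V s then q (enum_rank_in Hv0 s) else 0].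
have pE i : p (enum_val i) = q i.
  by rewrite ffunE (enum_valP i : V (enum_val i)) enum_valK_in.
exists p; split.
- by move=> s Vs; rewrite ffunE (negbTE Vs).
- by move=> s; rewrite ffunE; case: ifP.
- have -> : \sum_(s | V s) p s = \sum_(i < #|V|) p (enum_val i) := big_enum_val _.
  by under eq_bigr => i _ do rewrite pE.
- move=> t Vt; have Ht : t \in V by [].
  have <- := enum_rankK_in Hv0 Ht.
  set j := enum_rank_in Hv0 t.
  have -> : \sum_(s | V s && (s != enum_val j)) p s * r s (enum_val j) =
     \sum_(i < #|V| | enum_val i != enum_val j) p (enum_val i) * r (enum_val i) (enum_val j)
     := big_enum_val_cond _ _.
  have -> : \sum_(u | V u && (u != enum_val j)) r (enum_val j) u =
     \sum_(i < #|V| | enum_val i != enum_val j) r (enum_val j) (enum_val i)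
     := big_enum_val_cond _ _.
  have neq : (fun i => enum_val i != enum_val j) =1 (fun i => i != j).
    by move=> i; rewrite (inj_eq enum_val_inj).
  rewrite !(eq_bigl _ _ neq) pE -qb.
  by apply: eq_bigr => i _; rewrite pE.
Qed.

Variable E : rel T.
Hypothesis hE : forall a b, E a b -> [&& V a, V b & (a == b) || (0 < r a b)].
Hypothesis conn : forall s t, V s -> V t -> connect E s t.

Definition bal (v : T -> R) := forall t, V t ->
        \sum_(s | V s && (s != t)) v s * r s t
        = v t * \sum_(u | V u && (u != t)) r t u.

Lemma zero_conn v : (forall s, V s -> 0 <= v s) -> bal v ->
  forall t, V t -> v t = 0 -> forall s, connect E s t -> v s = 0.
Proof.
move=> v0 bv t Vt vt s /connectP [p]; elim: p s => [|y p IH] s /=.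
  by move=> _ <-.
case/andP => Esy py ht; have := hE Esy; case/and3P => Vs Vy /orP [/eqP ->|rsy].
  exact: IH.
have vy := IH _ py ht.
have := bv _ Vy; rewrite vy mul0r => H.
case: (eqVneq s y) => [->//|nsy].
have nn : forall i, V i && (i != y) -> 0 <= v i * r i y.
  by move=> i /andP [Vi _]; rewrite mulr_ge0 // v0.
have := psumr_eq0P nn H.
move=> /(_ s); rewrite Vs nsy => /(_ isT) /eqP.
by rewrite mulf_eq0 (gt_eqF rsy) orbF => /eqP.
Qed.

Lemma stat_pos p : stat p -> forall s, V s -> 0 < p s.
Proof.
case=> pV p0 p1 pb s Vs; rewrite lt0r p0 andbT; apply/eqP => ps.
have Z u : V u -> p u = 0.
  move=> Vu; apply: (@zero_conn p (fun s _ => p0 s) pb s) => //.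
  exact: conn.
move: p1; rewrite big1 => [/eqP|u Vu]; last exact: Z.
by rewrite eq_sym oner_eq0.
Qed.

Lemma stat_uniq p q v0 : V v0 -> stat p -> stat q -> forall s, p s = q s.
Proof.
move=> Vv0 sp sq; have qpos := stat_pos sq.
case: sp => pV p0 p1 pb; case: sq => qV q0 q1 qb.
case: (@arg_maxP _ _ T v0 V (fun i => p i / q i) Vv0) => i Vi Hi.
set M := p i / q i.
pose v j := M * q j - p j.
have v0' j : V j -> 0 <= v j.
  move=> Vj; rewrite subr_ge0 -ler_pdivrMr; first exact: Hi.
  exact: qpos.
have bv : bal v.
  move=> t Vt; rewrite /v.
  under eq_bigr => s _ do rewrite mulrBl -mulrA.
  rewrite sumrB -mulr_sumr qb // pb // mulrBl mulrA //.
have vi : v i = 0 by rewrite /v /M divfK ?subrr // gt_eqF // qpos.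
have vz j : V j -> v j = 0.
  move=> Vj; apply: (zero_conn v0' bv Vi vi); exact: conn.
have pq j : V j -> p j = M * q j.
  by move=> Vj; apply/eqP; rewrite eq_sym -subr_eq0; apply/eqP; apply: vz.
have M1 : M = 1.
  rewrite -p1 -[M]mulr1 -q1 mulr_sumr; apply: eq_bigr => j Vj.
  by rewrite pq.
move=> s; case: (boolP (V s)) => Vs; last by rewrite pV // qV.
by rewrite pq // M1 mul1r.
Qed.
End Gen.

Section Main.
Variables (n : nat) (prec : rel 'I_n).
Hypothesis natural : forall i j, prec i j -> (i < j)%N.
Variables (R : realFieldType) (x : 'I_n -> R).
Hypothesis x_pos : forall i, 0 < x i.

Definition Erel k : rel {perm 'I_n} := fun a b => [&& linext prec a, linext prec b & edge prec x k a b].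

Lemma edges_pos k s e : e \in edges prec x k s -> 0 < e.2.
Proof. by case: k; rewrite /edges => /mapP [j _ ->] /=; apply: x_pos. Qed.

Lemma iter_conn k (f : {perm 'I_n} -> {perm 'I_n}) :
  (forall c, linext prec c -> linext prec (f c) /\ Erel k c (f c)) ->
  forall m c, linext prec c -> linext prec (iter m f c) /\ connect (Erel k) c (iter m f c).
Proof.
move=> hf; elim=> [|m IH] c Lc /=; first by split => //; apply: connect0.
have [L1 C1] := IH c Lc; have [L2 E2] := hf _ L1.
split => //; apply: connect_trans C1 (connect1 E2).
Qed.

Lemma step_all k a i : linext prec a -> (i.+1 < n)%N -> connect (Erel k) a (tau prec a i).
Proof.
move=> La H.
pose a' : 'I_n := Ordinal (ltnW H); pose b : 'I_n := Ordinal H.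
have Hab : val b = (val a').+1 by [].
have hprom : k = UnifProm \/ k = Prom -> connect (Erel k) a (tau prec a i).
  move=> hk.
  pose f := fun c => partial prec c b.
  have finj : injective f := @foldl_tau_inj _ _ _.
  have hedge c (j : 'I_n) : linext prec c -> linext prec (partial prec c j) /\ Erel k c (partial prec c j).
    move=> Lc; have Lf : linext prec (partial prec c j) by apply: linext_foldl.
    split => //; rewrite /Erel Lc Lf /=; apply/hasP.
    case: hk => ->; [exists (partial prec c j, x j) | exists (partial prec c j, x (c j))];
      rewrite /= ?eqxx ?x_pos //; apply: (map_f (fun j : 'I_n => (partial prec c j, _))); exact: mem_enum.
  have hf c : linext prec c -> linext prec (f c) /\ Erel k c (f c) := hedge c b.
  have e : tau prec a i = finv f (partial prec a a').
    by rewrite (partial_step prec a Hab) finv_f.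
  have [La' Ca'] := hedge a a' La.
  rewrite e /finv; apply: connect_trans (connect1 Ca') _.
  by have [] := iter_conn hf (fingraph.order f (partial prec a a')).-1 La'.
case: k hprom => hprom; try (by apply: hprom; auto).
- apply: connect1; rewrite /Erel La linext_tau //=; apply/hasP.
  exists (tau prec a a', x a'); rewrite /= ?eqxx ?x_pos //.
  by apply/mapP; exists a'; rewrite // mem_filter mem_enum andbT.
- apply: connect1; rewrite /Erel La linext_tau //=; apply/hasP.
  exists (tau prec a a', x (a a')); rewrite /= ?eqxx ?x_pos //.
  by apply/mapP; exists a'; rewrite // mem_filter mem_enum andbT.
Qed.

Lemma irred k : irreducible prec x k.
Proof.
move=> s t Ls Lt.
have hs := bubble natural (@step_all k) Ls.
have ht := bubble natural (@step_all k) Lt.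
exact: connect_trans hs.1 ht.2.
Qed.

Lemma rate_ge0 k s t : 0 <= rate prec x k s t.
Proof.
rewrite /rate big_seq_cond; apply: sumr_ge0 => e /andP [He _].
exact: ltW (edges_pos He).
Qed.

Lemma sum_pos (l : seq ({perm 'I_n} * R)) t : (forall e, e \in l -> 0 <= e.2) ->
  has (fun e => (e.1 == t) && (0 < e.2)) l -> 0 < \sum_(e <- l | e.1 == t) e.2.
Proof.
elim: l => [|e l IH] //= hl /orP [/andP [/eqP et ep]|hh]; rewrite big_cons.
  rewrite et eqxx; apply: lt_le_trans ep _; rewrite lerDl big_seq_cond sumr_ge0 //.
  by move=> e' /andP [He' _]; apply: hl; rewrite inE He' orbT.
have hl' : forall e', e' \in l -> 0 <= e'.2.
  by move=> e' He'; apply: hl; rewrite inE He' orbT.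
have := IH hl' hh.
case: ifP => // _ H; apply: lt_le_trans H _; rewrite lerDr hl // mem_head.
all: done.
Qed.

Lemma rate_pos k s t : edge prec x k s t -> 0 < rate prec x k s t.
Proof.
move=> H; apply: sum_pos H => e He; exact: ltW (edges_pos He).
Qed.

End Main.

Theorem corollary4p2 (n : nat) (prec : rel 'I_n)
  (prec_irr : irreflexive prec) (prec_trans : transitive prec)
  (natural : forall i j, prec i j -> (i < j)%N)
  (R : realFieldType) (x : 'I_n -> R) (x_pos : forall i, 0 < x i)
  (k : graph_kind) :
  irreducible prec x k /\ exists! p, stationary prec x k p.
Proof.
have irr := irred natural x_pos k.
split => //.
have r0 := @rate_ge0 _ prec _ x x_pos k.
have [p sp] := exist_gen (V := linext prec) r0 (linext1 natural).
exists p; split; first exact: sp.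
move=> q sq; apply/ffunP => s.
have hE : forall a b, Erel prec x k a b -> [&& linext prec a, linext prec b & (a == b) || (0 < rate prec x k a b)].
  move=> a b /and3P [La Lb Eab]; rewrite La Lb /=.
  case: eqP => //= _; exact: rate_pos Eab.
exact: (stat_uniq r0 hE irr (linext1 natural) sp sq).
Qed.
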